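(* Let $\alpha_1,\alpha_2,\alpha_3,\alpha_4\in\mathbb{C}$ be pairwise distinct. Let $f:\mathbb{Z}^4\to\mathbb{C}$ be a solution of the discrete potential KdV equation on every elementary square of $\mathbb{Z}^4$, namely $$(f_{i,j}-f)(f_i-f_j)=\alpha_i-\alpha_j\qquad\text{for all } 1\le i<j\le 4,$$ at every vertex. Assume the solution is generic, so that all denominators below are nonzero. Define $$x=\frac{f_1-f_3}{f_2-f_3},\qquad v=\frac{f_1-f_4}{f_2-f_4},$$ $$y=\frac{f_{1,3}-f_{3,4}}{f_{2,3}-f_{3,4}},\qquad u=\frac{f_{1,4}-f_{3,4}}{f_{2,4}-f_{3,4}}.$$ Thus $y$ is the shift of $v$ in direction $3$, and $u$ is the shift of $x$ in direction $4$. Then the following hold. (i) The quantities $x,y,u,v$ are invariant under the three-parameter symmetry group $G$ of the equation, which is generated by $$f\mapsto f+\varepsilon_1,\qquad f\mapsto f\,e^{\varepsilon_2(-1)^{n_1+n_2+n_3+n_4}},\qquad f\mapsto f+\varepsilon_3(-1)^{n_1+n_2+n_3+n_4}.$$ (ii) They are related by the Harrison map: $$u=yQ,\qquad v=xQ^{-1},$$ $$Q=\frac{(1-\gamma_2)+(\gamma_2-\gamma_1)x+\gamma_2(\gamma_1-1)xy}{(1-\gamma_1)+(\gamma_1-\gamma_2)y+\gamma_1(\gamma_2-1)xy},$$ where $$\gamma_1=\frac{\alpha_2-\alpha_3}{\alpha_1-\alpha_3},\qquad \gamma_2=\frac{\alpha_2-\alpha_4}{\alpha_1-\alpha_4}.$$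 (iii) The Harrison map $R(x,y;\gamma_1,\gamma_2)=(yQ,\,xQ^{-1})$ is a Yang–Baxter map, i.e. $$R^{23}(\gamma_2,\gamma_3)R^{13}(\gamma_1,\gamma_3)R^{12}(\gamma_1,\gamma_2)=R^{12}(\gamma_1,\gamma_2)R^{13}(\gamma_1,\gamma_3)R^{23}(\gamma_2,\gamma_3).$$
   Context: Notation: $f=f(n)$, $f_i=f(n+e_i)$, $f_{i,j}=f(n+e_i+e_j)$ for $n=(n_1,\dots,n_4)\in\mathbb{Z}^4$, where $e_i$ are the unit vectors. For a map $R(x,y)=(F(x,y),H(x,y))$ on $\mathbb{X}\times\mathbb{X}$, the map $R^{ij}$ on $\mathbb{X}^3$ acts as $R$ on factors $i<j$, placing $F$ in slot $i$ and $H$ in slot $j$, and as the identity on the remaining factor. It uses the parameters indicated. *)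

(* Defs.v *)
From HB Require Import structures.
From mathcomp Require Import all_boot all_order all_algebra.
From mathcomp Require Import complex.
From mathcomp Require Import all_classical all_reals all_analysis.
Set Implicit Arguments. Unset Strict Implicit. Unset Printing Implicit Defensive.
Import Order.TTheory GRing.Theory Num.Theory.
Local Open Scope ring_scope.

Section Defs.
Variable R : realType.
Local Notation C := R[i].

Definition cexp (z : C) : C :=
  let: Complex a b := z in Complex (expR a * cos b) (expR a * sin b).

(* Lattice Z^4; the paper's directions 1,2,3,4 are the ordinals 0,1,2,3. *)
Definition pt := {ffun 'I_4 -> int}.
Definition sh (n : pt) (i : 'I_4) : pt := [ffun k => n k + (k == i)%:Z].
Definition psign (n : pt) : C := (-1) ^ (\sum_(k < 4) n k).

Definition d1 : 'I_4 := inord 0.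
Definition d2 : 'I_4 := inord 1.
Definition d3 : 'I_4 := inord 2.
Definition d4 : 'I_4 := inord 3.

Definition dpKdV (alpha : 'I_4 -> C) (f : pt -> C) : Prop :=
  forall (n : pt) (i j : 'I_4), (i < j)%N ->
    (f (sh (sh n i) j) - f n) * (f (sh n i) - f (sh n j)) = alpha i - alpha j.

Definition xq (f : pt -> C) (n : pt) : C :=
  (f (sh n d1) - f (sh n d3)) / (f (sh n d2) - f (sh n d3)).
Definition vq (f : pt -> C) (n : pt) : C :=
  (f (sh n d1) - f (sh n d4)) / (f (sh n d2) - f (sh n d4)).
Definition yq (f : pt -> C) (n : pt) : C :=
  (f (sh (sh n d1) d3) - f (sh (sh n d3) d4)) /
  (f (sh (sh n d2) d3) - f (sh (sh n d3) d4)).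
Definition uq (f : pt -> C) (n : pt) : C :=
  (f (sh (sh n d1) d4) - f (sh (sh n d3) d4)) /
  (f (sh (sh n d2) d4) - f (sh (sh n d3) d4)).

Definition gen1 (e : C) (f : pt -> C) : pt -> C := fun n => f n + e.
Definition gen2 (e : C) (f : pt -> C) : pt -> C := fun n => f n * cexp (e * psign n).
Definition gen3 (e : C) (f : pt -> C) : pt -> C := fun n => f n + e * psign n.

Inductive inG : ((pt -> C) -> (pt -> C)) -> Prop :=
  | inG_id : inG id
  | inG_gen1 e : inG (gen1 e)
  | inG_gen2 e : inG (gen2 e)
  | inG_gen3 e : inG (gen3 e)
  | inG_comp g h : inG g -> inG h -> inG (g \o h).

Definition Qnum (g1 g2 x y : C) : C := (1 - g2) + (g2 - g1) * x + g2 * (g1 - 1) * x * y.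
Definition Qden (g1 g2 x y : C) : C := (1 - g1) + (g1 - g2) * y + g1 * (g2 - 1) * x * y.
Definition Qh (g1 g2 x y : C) : C := Qnum g1 g2 x y / Qden g1 g2 x y.

(* R(x,y;g1,g2) = (y Q, x Q^-1), as a partial map: undefined (None) where
   a denominator (of Q or of Q^-1) vanishes *)
Definition harrison (g1 g2 : C) (p : C * C) : option (C * C) :=
  let: (x, y) := p in
  if (Qnum g1 g2 x y != 0) && (Qden g1 g2 x y != 0)
  then Some (y * Qh g1 g2 x y, x * (Qh g1 g2 x y)^-1) else None.

Definition R12 (g1 g2 : C) (t : C * C * C) : option (C * C * C) :=
  let: (a, b, c) := t in omap (fun p => (p.1, p.2, c)) (harrison g1 g2 (a, b)).
Definition R13 (g1 g2 : C) (t : C * C * C) : option (C * C * C) :=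
  let: (a, b, c) := t in omap (fun p => (p.1, b, p.2)) (harrison g1 g2 (a, c)).
Definition R23 (g1 g2 : C) (t : C * C * C) : option (C * C * C) :=
  let: (a, b, c) := t in omap (fun p => (a, p.1, p.2)) (harrison g1 g2 (b, c)).

End Defs.

(* Main.v *)
Require Import Defs.
From HB Require Import structures.
From mathcomp Require Import all_boot all_order all_algebra.
From mathcomp Require Import complex.
From mathcomp Require Import all_classical all_reals all_analysis.
From mathcomp Require Import ring lra.
Import Order.TTheory GRing.Theory Num.Theory.
Local Open Scope ring_scope.

Ltac nzr := match goal with |- is_true (?p != 0) => match goal with h : is_true (?q != 0) |- _ => let e := fresh in assert (e : p = q) by ring; rewrite e; exact h end end.
Ltac nz2 := repeat (apply/andP; split); try (first [done | assumption | nzr]).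

Lemma psign_sh (R : realType) (n : pt) (i : 'I_4) : psign R (sh n i) = - psign R n.
Proof.
rewrite /psign /sh.
have -> : \sum_(k < 4) [ffun k0 => n k0 + (k0 == i)%:Z] k = \sum_(k < 4) n k + 1.
  rewrite (eq_bigr (fun k => n k + (k == i)%:Z)) => [|k _]; last by rewrite ffunE.
  rewrite big_split /=; congr (_ + _).
  rewrite (bigD1 i) //= eqxx big1 ?addr0 // => k /negbTE -> //.
rewrite exprzDr ?expr1z ?mulrN1 //.
by rewrite unitrN unitr1.
Qed.

Lemma cexp_neq0 (R : realType) (z : R[i]) : cexp z != 0.
Proof.
case: z => a b /=.
apply/negP => /eqP [] h1 h2.
have := expR_gt0 a; rewrite lt0r => /andP[ea _].
move: h1 h2 => /eqP; rewrite mulf_eq0 (negbTE ea) /= => /eqP c0 /eqP.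
rewrite mulf_eq0 (negbTE ea) /= => /eqP s0.
have := cos2Dsin2 b; rewrite c0 s0 expr0n /= addr0 => /eqP.
by rewrite eq_sym oner_eq0.
Qed.

Lemma divMM (K : fieldType) (a b d c : K) : c != 0 ->
  (a * c - b * c) / (d * c - b * c) = (a - b) / (d - b).
Proof. by move=> hc; rewrite -!mulrBl invfM mulrACA divff // mulr1. Qed.

Lemma subDD (K : zmodType) (a b c : K) : (a + c) - (b + c) = a - b.
Proof. by rewrite opprD addrACA subrr addr0. Qed.

Lemma part1 (R : realType) : forall g, @inG R g -> forall (f : pt -> R[i]) (n : pt),
  [/\ xq (g f) n = xq f n, yq (g f) n = yq f n,
      uq (g f) n = uq f n & vq (g f) n = vq f n].
Proof.
move=> g0; elim => {g0}.
- by move=> f n; split.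
- by move=> e f n; rewrite /xq /yq /uq /vq /gen1 !subDD.
- by move=> e f n; rewrite /xq /yq /uq /vq /gen2 !psign_sh !divMM ?cexp_neq0.
- by move=> e f n; rewrite /xq /yq /uq /vq /gen3 !psign_sh !subDD.
- move=> g h _ IHg _ IHh f n /=.
  case: (IHg (h f) n) => -> -> -> ->.
  by case: (IHh f n) => -> -> -> ->.
Qed.
Lemma part2_alg (R : realType) (f0 f1 f2 f3 f4 f13 f14 f23 f24 f34 a1 a2 a3 a4 g1 g2 X Y U V : R[i])
  (e13 : (f13 - f0) * (f1 - f3) = a1 - a3) (e14 : (f14 - f0) * (f1 - f4) = a1 - a4)
  (e23 : (f23 - f0) * (f2 - f3) = a2 - a3) (e24 : (f24 - f0) * (f2 - f4) = a2 - a4)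
  (e34 : (f34 - f0) * (f3 - f4) = a3 - a4)
  (h13 : a1 != a3) (h14 : a1 != a4) (h23 : a2 != a3) (h24 : a2 != a4) (h34 : a3 != a4)
  (nD23 : f23 - f34 != 0) (nD24 : f24 - f34 != 0)
  (eg1 : g1 = (a2 - a3) / (a1 - a3)) (eg2 : g2 = (a2 - a4) / (a1 - a4))
  (eX : X = (f1 - f3) / (f2 - f3)) (eV : V = (f1 - f4) / (f2 - f4))
  (eY : Y = (f13 - f34) / (f23 - f34)) (eU : U = (f14 - f34) / (f24 - f34))
  (hN : Qnum g1 g2 X Y != 0) (hD : Qden g1 g2 X Y != 0) :
  U = Y * (Qnum g1 g2 X Y / Qden g1 g2 X Y) /\ V = X * (Qnum g1 g2 X Y / Qden g1 g2 X Y)^-1.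
Proof.
have n13 : f1 - f3 != 0.
  by apply: contraNneq h13 => E; rewrite -subr_eq0 -e13 E mulr0.
have k13 : a1 - a3 != 0 by rewrite subr_eq0.
have n14 : f1 - f4 != 0.
  by apply: contraNneq h14 => E; rewrite -subr_eq0 -e14 E mulr0.
have k14 : a1 - a4 != 0 by rewrite subr_eq0.
have n23 : f2 - f3 != 0.
  by apply: contraNneq h23 => E; rewrite -subr_eq0 -e23 E mulr0.
have k23 : a2 - a3 != 0 by rewrite subr_eq0.
have n24 : f2 - f4 != 0.
  by apply: contraNneq h24 => E; rewrite -subr_eq0 -e24 E mulr0.
have k24 : a2 - a4 != 0 by rewrite subr_eq0.
have n34 : f3 - f4 != 0.
  by apply: contraNneq h34 => E; rewrite -subr_eq0 -e34 E mulr0.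
have k34 : a3 - a4 != 0 by rewrite subr_eq0.
have s13 : f13 = f0 + (a1 - a3) / (f1 - f3).
  by rewrite -e13; field; nz2.
have s14 : f14 = f0 + (a1 - a4) / (f1 - f4).
  by rewrite -e14; field; nz2.
have s23 : f23 = f0 + (a2 - a3) / (f2 - f3).
  by rewrite -e23; field; nz2.
have s24 : f24 = f0 + (a2 - a4) / (f2 - f4).
  by rewrite -e24; field; nz2.
have s34 : f34 = f0 + (a3 - a4) / (f3 - f4).
  by rewrite -e34; field; nz2.
have hD1334 : f13 - f34 = (- (((f1*a3 - f1*a4 - f3*a1 + f3*a4 + f4*a1 - f4*a3)) / ((f1 - f3) * (f3 - f4)))).
  by rewrite s13 s34; field; nz2.
have hD2334 : f23 - f34 = (- (((f2*a3 - f2*a4 - f3*a2 + f3*a4 + f4*a2 - f4*a3)) / ((f2 - f3) * (f3 - f4)))).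
  by rewrite s23 s34; field; nz2.
have nz1 : (f2*a3 - f2*a4 - f3*a2 + f3*a4 + f4*a2 - f4*a3) != 0.
  by apply: contraNneq nD23 => E; apply/eqP; rewrite hD2334 E; ring.
have hD1434 : f14 - f34 = (- (((f1*a3 - f1*a4 - f3*a1 + f3*a4 + f4*a1 - f4*a3)) / ((f1 - f4) * (f3 - f4)))).
  by rewrite s14 s34; field; nz2.
have hD2434 : f24 - f34 = (- (((f2*a3 - f2*a4 - f3*a2 + f3*a4 + f4*a2 - f4*a3)) / ((f2 - f4) * (f3 - f4)))).
  by rewrite s24 s34; field; nz2.
have hg1 : g1 = (((a2 - a3)) / ((a1 - a3))).
  by rewrite eg1; field; nz2.
have hg2 : g2 = (((a2 - a4)) / ((a1 - a4))).
  by rewrite eg2; field; nz2.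
have hX : X = (((f1 - f3)) / ((f2 - f3))).
  by rewrite eX; field; nz2.
have hV : V = (((f1 - f4)) / ((f2 - f4))).
  by rewrite eV; field; nz2.
have hY : Y = (((f2 - f3) * (f1*a3 - f1*a4 - f3*a1 + f3*a4 + f4*a1 - f4*a3)) / ((f1 - f3) * (f2*a3 - f2*a4 - f3*a2 + f3*a4 + f4*a2 - f4*a3))).
  by rewrite eY hD1334 hD2334; field; nz2.
have hU : U = (((f2 - f4) * (f1*a3 - f1*a4 - f3*a1 + f3*a4 + f4*a1 - f4*a3)) / ((f1 - f4) * (f2*a3 - f2*a4 - f3*a2 + f3*a4 + f4*a2 - f4*a3))).
  by rewrite eU hD1434 hD2434; field; nz2.
have hNn : Qnum g1 g2 X Y = (- (((f2 - f4) * (a3 - a4) * (a1 - a2) * (f1*a2 - f1*a3 - f2*a1 + f2*a3 + f3*a1 - f3*a2)) / ((f2 - f3) * (a1 - a3) * (a1 - a4) * (f2*a3 - f2*a4 - f3*a2 + f3*a4 + f4*a2 - f4*a3)))).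
  by rewrite /Qnum hg1 hg2 hX hY; field; nz2.
have nz2 : (f1*a2 - f1*a3 - f2*a1 + f2*a3 + f3*a1 - f3*a2) != 0.
  by apply: contraNneq hN => E; apply/eqP; rewrite hNn E; ring.
have nz3 : (a1 - a2) != 0.
  by apply: contraNneq hN => E; apply/eqP; rewrite hNn E; ring.
have hDd : Qden g1 g2 X Y = (- (((f1 - f4) * (a3 - a4) * (a1 - a2) * (f1*a2 - f1*a3 - f2*a1 + f2*a3 + f3*a1 - f3*a2)) / ((f1 - f3) * (a1 - a3) * (a1 - a4) * (f2*a3 - f2*a4 - f3*a2 + f3*a4 + f4*a2 - f4*a3)))).
  by rewrite /Qden hg1 hg2 hX hY; field; nz2.
split.
  by rewrite hNn hDd hU hY; field; nz2.
by rewrite hNn hDd hV hX; field; nz2.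
Qed.
Lemma yb_alg (R : realType) (g1 g2 g3 x y z a1 b1 a2 c2 b3 c3 q1 r1 p2 r2 p3 q3 : R[i])
  (hN1 : Qnum g1 g2 x y != 0) (hD1 : Qden g1 g2 x y != 0)
  (ea1 : a1 = y * (Qnum g1 g2 x y / Qden g1 g2 x y))
  (eb1 : b1 = x * (Qnum g1 g2 x y / Qden g1 g2 x y)^-1)
  (hN2 : Qnum g1 g3 a1 z != 0) (hD2 : Qden g1 g3 a1 z != 0)
  (ea2 : a2 = z * (Qnum g1 g3 a1 z / Qden g1 g3 a1 z))
  (ec2 : c2 = a1 * (Qnum g1 g3 a1 z / Qden g1 g3 a1 z)^-1)
  (hN3 : Qnum g2 g3 b1 c2 != 0) (hD3 : Qden g2 g3 b1 c2 != 0)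
  (eb3 : b3 = c2 * (Qnum g2 g3 b1 c2 / Qden g2 g3 b1 c2))
  (ec3 : c3 = b1 * (Qnum g2 g3 b1 c2 / Qden g2 g3 b1 c2)^-1)
  (hN4 : Qnum g2 g3 y z != 0) (hD4 : Qden g2 g3 y z != 0)
  (eq1 : q1 = z * (Qnum g2 g3 y z / Qden g2 g3 y z))
  (er1 : r1 = y * (Qnum g2 g3 y z / Qden g2 g3 y z)^-1)
  (hN5 : Qnum g1 g3 x r1 != 0) (hD5 : Qden g1 g3 x r1 != 0)
  (ep2 : p2 = r1 * (Qnum g1 g3 x r1 / Qden g1 g3 x r1))
  (er2 : r2 = x * (Qnum g1 g3 x r1 / Qden g1 g3 x r1)^-1)
  (hN6 : Qnum g1 g2 p2 q1 != 0) (hD6 : Qden g1 g2 p2 q1 != 0)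
  (ep3 : p3 = q1 * (Qnum g1 g2 p2 q1 / Qden g1 g2 p2 q1))
  (eq3 : q3 = p2 * (Qnum g1 g2 p2 q1 / Qden g1 g2 p2 q1)^-1)
  : (a2, b3, c3) = (p3, q3, r2).
Proof.
have fN1 : Qnum g1 g2 x y = ((x*y*g1*g2 - x*y*g2 - x*g1 + x*g2 - g2 + 1)).
  by rewrite /Qnum ; field; nz2.
have fD1 : Qden g1 g2 x y = ((x*y*g1*g2 - x*y*g1 + y*g1 - y*g2 - g1 + 1)).
  by rewrite /Qden ; field; nz2.
have nz1 : (x*y*g1*g2 - x*y*g2 - x*g1 + x*g2 - g2 + 1) != 0.
  by apply: contraNneq hN1 => E; apply/eqP; rewrite fN1 E; ring.
have nz2 : (x*y*g1*g2 - x*y*g1 + y*g1 - y*g2 - g1 + 1) != 0.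
  by apply: contraNneq hD1 => E; apply/eqP; rewrite fD1 E; ring.
have fa1 : a1 = (((y) * (x*y*g1*g2 - x*y*g2 - x*g1 + x*g2 - g2 + 1)) / ((x*y*g1*g2 - x*y*g1 + y*g1 - y*g2 - g1 + 1))).
  by rewrite ea1 fN1 fD1 ; field; nz2.
have fb1 : b1 = (((x) * (x*y*g1*g2 - x*y*g1 + y*g1 - y*g2 - g1 + 1)) / ((x*y*g1*g2 - x*y*g2 - x*g1 + x*g2 - g2 + 1))).
  by rewrite eb1 fN1 fD1 ; field; nz2.
have fN2 : Qnum g1 g3 a1 z = (((g1 - 1) * (x*y^+2*z*g1*g2*g3 - x*y^+2*z*g2*g3 - x*y^+2*g1*g2 + x*y^+2*g2*g3 - x*y*z*g1*g3 + x*y*z*g2*g3 + x*y*g1 - x*y*g2*g3 - y*z*g2*g3 + y*z*g3 + y*g2 - y*g3 + g3 - 1)) / ((x*y*g1*g2 - x*y*g1 + y*g1 - y*g2 - g1 + 1))).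
  by rewrite /Qnum ?fa1; field; nz2.
have fD2 : Qden g1 g3 a1 z = (((g1 - 1) * (x*y^+2*z*g1*g2*g3 - x*y^+2*z*g1*g2 + x*y*z*g1*g2 - x*y*z*g1*g3 - x*y*g1*g2 + x*y*g1 + y*z*g1 - y*z*g2*g3 - y*g1 + y*g2 - z*g1 + z*g3 + g1 - 1)) / ((x*y*g1*g2 - x*y*g1 + y*g1 - y*g2 - g1 + 1))).
  by rewrite /Qden ?fa1; field; nz2.
have nz3 : (x*y^+2*z*g1*g2*g3 - x*y^+2*z*g2*g3 - x*y^+2*g1*g2 + x*y^+2*g2*g3 - x*y*z*g1*g3 + x*y*z*g2*g3 + x*y*g1 - x*y*g2*g3 - y*z*g2*g3 + y*z*g3 + y*g2 - y*g3 + g3 - 1) != 0.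
  by apply: contraNneq hN2 => E; apply/eqP; rewrite fN2 E; ring.
have nz4 : (g1 - 1) != 0.
  by apply: contraNneq hN2 => E; apply/eqP; rewrite fN2 E; ring.
have nz5 : (x*y^+2*z*g1*g2*g3 - x*y^+2*z*g1*g2 + x*y*z*g1*g2 - x*y*z*g1*g3 - x*y*g1*g2 + x*y*g1 + y*z*g1 - y*z*g2*g3 - y*g1 + y*g2 - z*g1 + z*g3 + g1 - 1) != 0.
  by apply: contraNneq hD2 => E; apply/eqP; rewrite fD2 E; ring.
have fa2 : a2 = (((z) * (x*y^+2*z*g1*g2*g3 - x*y^+2*z*g2*g3 - x*y^+2*g1*g2 + x*y^+2*g2*g3 - x*y*z*g1*g3 + x*y*z*g2*g3 + x*y*g1 - x*y*g2*g3 - y*z*g2*g3 + y*z*g3 + y*g2 - y*g3 + g3 - 1)) / ((x*y^+2*z*g1*g2*g3 - x*y^+2*z*g1*g2 + x*y*z*g1*g2 - x*y*z*g1*g3 - x*y*g1*g2 + x*y*g1 + y*z*g1 - y*z*g2*g3 - y*g1 + y*g2 - z*g1 + z*g3 + g1 - 1))).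
  by rewrite ea2 fN2 fD2 ?fa1; field; nz2.
have fc2 : c2 = (((y) * (x*y*g1*g2 - x*y*g2 - x*g1 + x*g2 - g2 + 1) * (x*y^+2*z*g1*g2*g3 - x*y^+2*z*g1*g2 + x*y*z*g1*g2 - x*y*z*g1*g3 - x*y*g1*g2 + x*y*g1 + y*z*g1 - y*z*g2*g3 - y*g1 + y*g2 - z*g1 + z*g3 + g1 - 1)) / ((x*y*g1*g2 - x*y*g1 + y*g1 - y*g2 - g1 + 1) * (x*y^+2*z*g1*g2*g3 - x*y^+2*z*g2*g3 - x*y^+2*g1*g2 + x*y^+2*g2*g3 - x*y*z*g1*g3 + x*y*z*g2*g3 + x*y*g1 - x*y*g2*g3 - y*z*g2*g3 + y*z*g3 + y*g2 - y*g3 + g3 - 1))).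
  by rewrite ec2 fN2 fD2 ?fa1; field; nz2.
have fN3 : Qnum g2 g3 b1 c2 = (((g2 - 1) * (g3 - 1) * (x^+3*y^+4*z*g1^+2*g2^+2*g3 - x^+3*y^+4*z*g1*g2^+2*g3 - x^+3*y^+3*z*g1^+2*g2*g3 + x^+3*y^+3*z*g1*g2^+2*g3 - x^+3*y^+3*g1^+2*g2^+2 + x^+3*y^+3*g1*g2*g3 + x^+3*y^+2*g1^+2*g2 - x^+3*y^+2*g1*g2*g3 - x^+2*y^+3*z*g1^+2*g2*g3 - 2*x^+2*y^+3*z*g1*g2^+2*g3 + 2*x^+2*y^+3*z*g1*g2*g3 + x^+2*y^+3*z*g2^+2*g3 + x^+2*y^+3*g1*g2^+2 - x^+2*y^+3*g1*g2*g3 + x^+2*y^+2*z*g1^+2*g3 - x^+2*y^+2*z*g2^+2*g3 + x^+2*y^+2*g1^+2*g2 + x^+2*y^+2*g1*g2^+2 + x^+2*y^+2*g1*g2*g3 - x^+2*y^+2*g1*g2 - x^+2*y^+2*g1*g3 - x^+2*y^+2*g2*g3 - x^+2*y*g1^+2 - x^+2*y*g1*g2 + x^+2*y*g1*g3 + x^+2*y*g2*g3 + 2*x*y^+2*z*g1*g2*g3 - x*y^+2*z*g1*g3 + x*y^+2*z*g2^+2*g3 - 2*x*y^+2*z*g2*g3 - x*y^+2*g1*g2 + x*y^+2*g1*g3 - x*y^+2*g2^+2 + x*y^+2*g2*g3 - x*y*z*g1*g3 + x*y*z*g2*g3 - x*y*g1*g2 - x*y*g1*g3 + x*y*g1 -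 x*y*g2*g3 + x*y*g2 + x*y*g3 + x*g1 - x*g3 - y*z*g2*g3 + y*z*g3 + y*g2 - y*g3 + g3 - 1)) / ((x*y*g1*g2 - x*y*g2 - x*g1 + x*g2 - g2 + 1) * (x*y^+2*z*g1*g2*g3 - x*y^+2*z*g2*g3 - x*y^+2*g1*g2 + x*y^+2*g2*g3 - x*y*z*g1*g3 + x*y*z*g2*g3 + x*y*g1 - x*y*g2*g3 - y*z*g2*g3 + y*z*g3 + y*g2 - y*g3 + g3 - 1))).
  by rewrite /Qnum ?fb1 ?fc2; field; nz2.
have fD3 : Qden g2 g3 b1 c2 = (((g2 - 1) * (g3 - 1) * (x^+3*y^+4*z*g1^+2*g2^+2*g3 - x^+3*y^+4*z*g1^+2*g2^+2 + x^+3*y^+3*z*g1^+2*g2^+2 - x^+3*y^+3*z*g1^+2*g2*g3 - x^+3*y^+3*g1^+2*g2^+2 + x^+3*y^+3*g1^+2*g2 + x^+2*y^+4*z*g1^+2*g2^+2 - x^+2*y^+4*z*g1*g2^+2*g3 - x^+2*y^+3*z*g1^+2*g2^+2 - x^+2*y^+3*z*g1^+2*g2*g3 + x^+2*y^+3*z*g1^+2*g2 - x^+2*y^+3*z*g1*g2^+2*g3 + x^+2*y^+3*z*g1*g2^+2 + x^+2*y^+3*z*g1*g2*g3 - x^+2*y^+3*g1^+2*g2 + x^+2*y^+3*g1*g2^+2 - x^+2*y^+2*z*g1^+2*g2 + x^+2*y^+2*z*g1^+2*g3 - x^+2*y^+2*z*g1*g2^+2 + x^+2*y^+2*z*g1*g2*g3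 + 2*x^+2*y^+2*g1^+2*g2 - x^+2*y^+2*g1^+2 + x^+2*y^+2*g1*g2^+2 - 2*x^+2*y^+2*g1*g2 - x*y^+3*z*g1^+2*g2 - x*y^+3*z*g1*g2^+2 + x*y^+3*z*g1*g2*g3 + x*y^+3*z*g2^+2*g3 + x*y^+2*z*g1^+2*g2 + x*y^+2*z*g1*g2^+2 + x*y^+2*z*g1*g2*g3 - x*y^+2*z*g1*g2 - x*y^+2*z*g1*g3 - x*y^+2*z*g2*g3 + x*y^+2*g1^+2 - x*y^+2*g2^+2 + x*y*z*g1*g2 - x*y*z*g1*g3 - x*y*g1^+2 - 2*x*y*g1*g2 + 2*x*y*g1 + x*y*g2 + y^+2*z*g1*g2 - y^+2*z*g2*g3 - y*z*g1*g2 + y*z*g3 - y*g1 + y*g2 + g1 - 1)) / ((x*y*g1*g2 - x*y*g1 + y*g1 - y*g2 - g1 + 1) * (x*y^+2*z*g1*g2*g3 - x*y^+2*z*g2*g3 - x*y^+2*g1*g2 + x*y^+2*g2*g3 - x*y*z*g1*g3 + x*y*z*g2*g3 + x*y*g1 - x*y*g2*g3 - y*z*g2*g3 + y*z*g3 + y*g2 - y*g3 + g3 - 1))).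
  by rewrite /Qden ?fb1 ?fc2; field; nz2.
have nz6 : (g3 - 1) != 0.
  by apply: contraNneq hN3 => E; apply/eqP; rewrite fN3 E; ring.
have nz7 : (x^+3*y^+4*z*g1^+2*g2^+2*g3 - x^+3*y^+4*z*g1*g2^+2*g3 - x^+3*y^+3*z*g1^+2*g2*g3 + x^+3*y^+3*z*g1*g2^+2*g3 - x^+3*y^+3*g1^+2*g2^+2 + x^+3*y^+3*g1*g2*g3 + x^+3*y^+2*g1^+2*g2 - x^+3*y^+2*g1*g2*g3 - x^+2*y^+3*z*g1^+2*g2*g3 - 2*x^+2*y^+3*z*g1*g2^+2*g3 + 2*x^+2*y^+3*z*g1*g2*g3 + x^+2*y^+3*z*g2^+2*g3 + x^+2*y^+3*g1*g2^+2 - x^+2*y^+3*g1*g2*g3 + x^+2*y^+2*z*g1^+2*g3 - x^+2*y^+2*z*g2^+2*g3 + x^+2*y^+2*g1^+2*g2 + x^+2*y^+2*g1*g2^+2 + x^+2*y^+2*g1*g2*g3 - x^+2*y^+2*g1*g2 - x^+2*y^+2*g1*g3 - x^+2*y^+2*g2*g3 - x^+2*y*g1^+2 - x^+2*y*g1*g2 + x^+2*y*g1*g3 + x^+2*y*g2*g3 + 2*x*y^+2*z*g1*g2*g3 - x*y^+2*z*g1*g3 + x*y^+2*z*g2^+2*g3 - 2*x*y^+2*z*g2*g3 - x*y^+2*g1*g2 + x*y^+2*g1*g3 - x*y^+2*g2^+2 + x*y^+2*g2*g3 - x*y*z*g1*g3 + x*y*z*g2*g3 - x*y*g1*g2 -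 x*y*g1*g3 + x*y*g1 - x*y*g2*g3 + x*y*g2 + x*y*g3 + x*g1 - x*g3 - y*z*g2*g3 + y*z*g3 + y*g2 - y*g3 + g3 - 1) != 0.
  by apply: contraNneq hN3 => E; apply/eqP; rewrite fN3 E; ring.
have nz8 : (g2 - 1) != 0.
  by apply: contraNneq hN3 => E; apply/eqP; rewrite fN3 E; ring.
have nz9 : (x^+3*y^+4*z*g1^+2*g2^+2*g3 - x^+3*y^+4*z*g1^+2*g2^+2 + x^+3*y^+3*z*g1^+2*g2^+2 - x^+3*y^+3*z*g1^+2*g2*g3 - x^+3*y^+3*g1^+2*g2^+2 + x^+3*y^+3*g1^+2*g2 + x^+2*y^+4*z*g1^+2*g2^+2 - x^+2*y^+4*z*g1*g2^+2*g3 - x^+2*y^+3*z*g1^+2*g2^+2 - x^+2*y^+3*z*g1^+2*g2*g3 + x^+2*y^+3*z*g1^+2*g2 - x^+2*y^+3*z*g1*g2^+2*g3 + x^+2*y^+3*z*g1*g2^+2 + x^+2*y^+3*z*g1*g2*g3 - x^+2*y^+3*g1^+2*g2 + x^+2*y^+3*g1*g2^+2 - x^+2*y^+2*z*g1^+2*g2 + x^+2*y^+2*z*g1^+2*g3 - x^+2*y^+2*z*g1*g2^+2 + x^+2*y^+2*z*g1*g2*g3 + 2*x^+2*y^+2*g1^+2*g2 - x^+2*y^+2*g1^+2 + x^+2*y^+2*g1*g2^+2 - 2*x^+2*y^+2*g1*g2 - x*y^+3*z*g1^+2*g2 - x*y^+3*z*g1*g2^+2 + x*y^+3*z*g1*g2*g3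 + x*y^+3*z*g2^+2*g3 + x*y^+2*z*g1^+2*g2 + x*y^+2*z*g1*g2^+2 + x*y^+2*z*g1*g2*g3 - x*y^+2*z*g1*g2 - x*y^+2*z*g1*g3 - x*y^+2*z*g2*g3 + x*y^+2*g1^+2 - x*y^+2*g2^+2 + x*y*z*g1*g2 - x*y*z*g1*g3 - x*y*g1^+2 - 2*x*y*g1*g2 + 2*x*y*g1 + x*y*g2 + y^+2*z*g1*g2 - y^+2*z*g2*g3 - y*z*g1*g2 + y*z*g3 - y*g1 + y*g2 + g1 - 1) != 0.
  by apply: contraNneq hD3 => E; apply/eqP; rewrite fD3 E; ring.
have fb3 : b3 = (((y) * (x*y^+2*z*g1*g2*g3 - x*y^+2*z*g1*g2 + x*y*z*g1*g2 - x*y*z*g1*g3 - x*y*g1*g2 + x*y*g1 + y*z*g1 - y*z*g2*g3 - y*g1 + y*g2 - z*g1 + z*g3 + g1 - 1) * (x^+3*y^+4*z*g1^+2*g2^+2*g3 - x^+3*y^+4*z*g1*g2^+2*g3 - x^+3*y^+3*z*g1^+2*g2*g3 + x^+3*y^+3*z*g1*g2^+2*g3 - x^+3*y^+3*g1^+2*g2^+2 + x^+3*y^+3*g1*g2*g3 + x^+3*y^+2*g1^+2*g2 - x^+3*y^+2*g1*g2*g3 - x^+2*y^+3*z*g1^+2*g2*g3 - 2*x^+2*y^+3*z*g1*g2^+2*g3 + 2*x^+2*y^+3*z*g1*g2*g3 + x^+2*y^+3*z*g2^+2*g3 + x^+2*y^+3*g1*g2^+2 - x^+2*y^+3*g1*g2*g3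 + x^+2*y^+2*z*g1^+2*g3 - x^+2*y^+2*z*g2^+2*g3 + x^+2*y^+2*g1^+2*g2 + x^+2*y^+2*g1*g2^+2 + x^+2*y^+2*g1*g2*g3 - x^+2*y^+2*g1*g2 - x^+2*y^+2*g1*g3 - x^+2*y^+2*g2*g3 - x^+2*y*g1^+2 - x^+2*y*g1*g2 + x^+2*y*g1*g3 + x^+2*y*g2*g3 + 2*x*y^+2*z*g1*g2*g3 - x*y^+2*z*g1*g3 + x*y^+2*z*g2^+2*g3 - 2*x*y^+2*z*g2*g3 - x*y^+2*g1*g2 + x*y^+2*g1*g3 - x*y^+2*g2^+2 + x*y^+2*g2*g3 - x*y*z*g1*g3 + x*y*z*g2*g3 - x*y*g1*g2 - x*y*g1*g3 + x*y*g1 - x*y*g2*g3 + x*y*g2 + x*y*g3 + x*g1 - x*g3 - y*z*g2*g3 + y*z*g3 + y*g2 - y*g3 + g3 - 1)) / ((x*y^+2*z*g1*g2*g3 - x*y^+2*z*g2*g3 - x*y^+2*g1*g2 + x*y^+2*g2*g3 - x*y*z*g1*g3 + x*y*z*g2*g3 + x*y*g1 - x*y*g2*g3 - y*z*g2*g3 + y*z*g3 + y*g2 - y*g3 + g3 - 1) * (x^+3*y^+4*z*g1^+2*g2^+2*g3 - x^+3*y^+4*z*g1^+2*g2^+2 + x^+3*y^+3*z*g1^+2*g2^+2 - x^+3*y^+3*z*g1^+2*g2*g3 - x^+3*y^+3*g1^+2*g2^+2 + x^+3*y^+3*g1^+2*g2 + x^+2*y^+4*z*g1^+2*g2^+2 -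 x^+2*y^+4*z*g1*g2^+2*g3 - x^+2*y^+3*z*g1^+2*g2^+2 - x^+2*y^+3*z*g1^+2*g2*g3 + x^+2*y^+3*z*g1^+2*g2 - x^+2*y^+3*z*g1*g2^+2*g3 + x^+2*y^+3*z*g1*g2^+2 + x^+2*y^+3*z*g1*g2*g3 - x^+2*y^+3*g1^+2*g2 + x^+2*y^+3*g1*g2^+2 - x^+2*y^+2*z*g1^+2*g2 + x^+2*y^+2*z*g1^+2*g3 - x^+2*y^+2*z*g1*g2^+2 + x^+2*y^+2*z*g1*g2*g3 + 2*x^+2*y^+2*g1^+2*g2 - x^+2*y^+2*g1^+2 + x^+2*y^+2*g1*g2^+2 - 2*x^+2*y^+2*g1*g2 - x*y^+3*z*g1^+2*g2 - x*y^+3*z*g1*g2^+2 + x*y^+3*z*g1*g2*g3 + x*y^+3*z*g2^+2*g3 + x*y^+2*z*g1^+2*g2 + x*y^+2*z*g1*g2^+2 + x*y^+2*z*g1*g2*g3 - x*y^+2*z*g1*g2 - x*y^+2*z*g1*g3 - x*y^+2*z*g2*g3 + x*y^+2*g1^+2 - x*y^+2*g2^+2 + x*y*z*g1*g2 - x*y*z*g1*g3 - x*y*g1^+2 - 2*x*y*g1*g2 + 2*x*y*g1 + x*y*g2 + y^+2*z*g1*g2 - y^+2*z*g2*g3 - y*z*g1*g2 + y*z*g3 - y*g1 + y*g2 + g1 - 1))).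
  by rewrite eb3 fN3 fD3 ?fb1 ?fc2; field; nz2.
have fc3 : c3 = (((x) * (x^+3*y^+4*z*g1^+2*g2^+2*g3 - x^+3*y^+4*z*g1^+2*g2^+2 + x^+3*y^+3*z*g1^+2*g2^+2 - x^+3*y^+3*z*g1^+2*g2*g3 - x^+3*y^+3*g1^+2*g2^+2 + x^+3*y^+3*g1^+2*g2 + x^+2*y^+4*z*g1^+2*g2^+2 - x^+2*y^+4*z*g1*g2^+2*g3 - x^+2*y^+3*z*g1^+2*g2^+2 - x^+2*y^+3*z*g1^+2*g2*g3 + x^+2*y^+3*z*g1^+2*g2 - x^+2*y^+3*z*g1*g2^+2*g3 + x^+2*y^+3*z*g1*g2^+2 + x^+2*y^+3*z*g1*g2*g3 - x^+2*y^+3*g1^+2*g2 + x^+2*y^+3*g1*g2^+2 - x^+2*y^+2*z*g1^+2*g2 + x^+2*y^+2*z*g1^+2*g3 - x^+2*y^+2*z*g1*g2^+2 + x^+2*y^+2*z*g1*g2*g3 + 2*x^+2*y^+2*g1^+2*g2 - x^+2*y^+2*g1^+2 + x^+2*y^+2*g1*g2^+2 - 2*x^+2*y^+2*g1*g2 - x*y^+3*z*g1^+2*g2 - x*y^+3*z*g1*g2^+2 + x*y^+3*z*g1*g2*g3 + x*y^+3*z*g2^+2*g3 + x*y^+2*z*g1^+2*g2 + x*y^+2*z*g1*g2^+2 + x*y^+2*z*g1*g2*g3 - x*y^+2*z*g1*g2 - x*y^+2*z*g1*g3 - x*y^+2*z*g2*g3 + x*y^+2*g1^+2 - x*y^+2*g2^+2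 + x*y*z*g1*g2 - x*y*z*g1*g3 - x*y*g1^+2 - 2*x*y*g1*g2 + 2*x*y*g1 + x*y*g2 + y^+2*z*g1*g2 - y^+2*z*g2*g3 - y*z*g1*g2 + y*z*g3 - y*g1 + y*g2 + g1 - 1)) / ((x^+3*y^+4*z*g1^+2*g2^+2*g3 - x^+3*y^+4*z*g1*g2^+2*g3 - x^+3*y^+3*z*g1^+2*g2*g3 + x^+3*y^+3*z*g1*g2^+2*g3 - x^+3*y^+3*g1^+2*g2^+2 + x^+3*y^+3*g1*g2*g3 + x^+3*y^+2*g1^+2*g2 - x^+3*y^+2*g1*g2*g3 - x^+2*y^+3*z*g1^+2*g2*g3 - 2*x^+2*y^+3*z*g1*g2^+2*g3 + 2*x^+2*y^+3*z*g1*g2*g3 + x^+2*y^+3*z*g2^+2*g3 + x^+2*y^+3*g1*g2^+2 - x^+2*y^+3*g1*g2*g3 + x^+2*y^+2*z*g1^+2*g3 - x^+2*y^+2*z*g2^+2*g3 + x^+2*y^+2*g1^+2*g2 + x^+2*y^+2*g1*g2^+2 + x^+2*y^+2*g1*g2*g3 - x^+2*y^+2*g1*g2 - x^+2*y^+2*g1*g3 - x^+2*y^+2*g2*g3 - x^+2*y*g1^+2 - x^+2*y*g1*g2 + x^+2*y*g1*g3 + x^+2*y*g2*g3 + 2*x*y^+2*z*g1*g2*g3 - x*y^+2*z*g1*g3 + x*y^+2*z*g2^+2*g3 - 2*x*y^+2*z*g2*g3 - x*y^+2*g1*g2 + x*y^+2*g1*g3 - x*y^+2*g2^+2 + x*y^+2*g2*g3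 - x*y*z*g1*g3 + x*y*z*g2*g3 - x*y*g1*g2 - x*y*g1*g3 + x*y*g1 - x*y*g2*g3 + x*y*g2 + x*y*g3 + x*g1 - x*g3 - y*z*g2*g3 + y*z*g3 + y*g2 - y*g3 + g3 - 1))).
  by rewrite ec3 fN3 fD3 ?fb1 ?fc2; field; nz2.
have fN4 : Qnum g2 g3 y z = ((y*z*g2*g3 - y*z*g3 - y*g2 + y*g3 - g3 + 1)).
  by rewrite /Qnum ; field; nz2.
have fD4 : Qden g2 g3 y z = ((y*z*g2*g3 - y*z*g2 + z*g2 - z*g3 - g2 + 1)).
  by rewrite /Qden ; field; nz2.
have nz10 : (y*z*g2*g3 - y*z*g3 - y*g2 + y*g3 - g3 + 1) != 0.
  by apply: contraNneq hN4 => E; apply/eqP; rewrite fN4 E; ring.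
have nz11 : (y*z*g2*g3 - y*z*g2 + z*g2 - z*g3 - g2 + 1) != 0.
  by apply: contraNneq hD4 => E; apply/eqP; rewrite fD4 E; ring.
have fq1 : q1 = (((z) * (y*z*g2*g3 - y*z*g3 - y*g2 + y*g3 - g3 + 1)) / ((y*z*g2*g3 - y*z*g2 + z*g2 - z*g3 - g2 + 1))).
  by rewrite eq1 fN4 fD4 ; field; nz2.
have fr1 : r1 = (((y) * (y*z*g2*g3 - y*z*g2 + z*g2 - z*g3 - g2 + 1)) / ((y*z*g2*g3 - y*z*g3 - y*g2 + y*g3 - g3 + 1))).
  by rewrite er1 fN4 fD4 ; field; nz2.
have fN5 : Qnum g1 g3 x r1 = (((g3 - 1) * (x*y^+2*z*g1*g2*g3 - x*y^+2*z*g2*g3 - x*y*z*g1*g3 + x*y*z*g2*g3 - x*y*g1*g2 + x*y*g3 + x*g1 - x*g3 - y*z*g2*g3 + y*z*g3 + y*g2 - y*g3 + g3 - 1)) / ((y*z*g2*g3 - y*z*g3 - y*g2 + y*g3 - g3 + 1))).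
  by rewrite /Qnum ?fr1; field; nz2.
have fD5 : Qden g1 g3 x r1 = (((g3 - 1) * (x*y^+2*z*g1*g2*g3 - x*y^+2*z*g1*g2 + x*y*z*g1*g2 - x*y*z*g1*g3 - x*y*g1*g2 + x*y*g1 + y^+2*z*g1*g2 - y^+2*z*g2*g3 - y*z*g1*g2 + y*z*g3 - y*g1 + y*g2 + g1 - 1)) / ((y*z*g2*g3 - y*z*g3 - y*g2 + y*g3 - g3 + 1))).
  by rewrite /Qden ?fr1; field; nz2.
have nz12 : (x*y^+2*z*g1*g2*g3 - x*y^+2*z*g2*g3 - x*y*z*g1*g3 + x*y*z*g2*g3 - x*y*g1*g2 + x*y*g3 + x*g1 - x*g3 - y*z*g2*g3 + y*z*g3 + y*g2 - y*g3 + g3 - 1) != 0.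
  by apply: contraNneq hN5 => E; apply/eqP; rewrite fN5 E; ring.
have nz13 : (x*y^+2*z*g1*g2*g3 - x*y^+2*z*g1*g2 + x*y*z*g1*g2 - x*y*z*g1*g3 - x*y*g1*g2 + x*y*g1 + y^+2*z*g1*g2 - y^+2*z*g2*g3 - y*z*g1*g2 + y*z*g3 - y*g1 + y*g2 + g1 - 1) != 0.
  by apply: contraNneq hD5 => E; apply/eqP; rewrite fD5 E; ring.
have fp2 : p2 = (((y) * (y*z*g2*g3 - y*z*g2 + z*g2 - z*g3 - g2 + 1) * (x*y^+2*z*g1*g2*g3 - x*y^+2*z*g2*g3 - x*y*z*g1*g3 + x*y*z*g2*g3 - x*y*g1*g2 + x*y*g3 + x*g1 - x*g3 - y*z*g2*g3 + y*z*g3 + y*g2 - y*g3 + g3 - 1)) / ((y*z*g2*g3 - y*z*g3 - y*g2 + y*g3 - g3 + 1) * (x*y^+2*z*g1*g2*g3 - x*y^+2*z*g1*g2 + x*y*z*g1*g2 - x*y*z*g1*g3 - x*y*g1*g2 + x*y*g1 + y^+2*z*g1*g2 - y^+2*z*g2*g3 - y*z*g1*g2 + y*z*g3 - y*g1 + y*g2 + g1 - 1))).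
  by rewrite ep2 fN5 fD5 ?fr1; field; nz2.
have fr2 : r2 = (((x) * (x*y^+2*z*g1*g2*g3 - x*y^+2*z*g1*g2 + x*y*z*g1*g2 - x*y*z*g1*g3 - x*y*g1*g2 + x*y*g1 + y^+2*z*g1*g2 - y^+2*z*g2*g3 - y*z*g1*g2 + y*z*g3 - y*g1 + y*g2 + g1 - 1)) / ((x*y^+2*z*g1*g2*g3 - x*y^+2*z*g2*g3 - x*y*z*g1*g3 + x*y*z*g2*g3 - x*y*g1*g2 + x*y*g3 + x*g1 - x*g3 - y*z*g2*g3 + y*z*g3 + y*g2 - y*g3 + g3 - 1))).
  by rewrite er2 fN5 fD5 ?fr1; field; nz2.
have fN6 : Qnum g1 g2 p2 q1 = (((g2 - 1) * (g1 - 1) * (x*y^+2*z*g1*g2*g3 - x*y^+2*z*g2*g3 - x*y^+2*g1*g2 + x*y^+2*g2*g3 - x*y*z*g1*g3 + x*y*z*g2*g3 + x*y*g1 - x*y*g2*g3 - y*z*g2*g3 + y*z*g3 + y*g2 - y*g3 + g3 - 1) * (y^+2*z^+2*g2*g3 - y*z*g2 - y*z*g3 + 1)) / ((y*z*g2*g3 - y*z*g3 - y*g2 + y*g3 - g3 + 1) * (x*y^+2*z*g1*g2*g3 - x*y^+2*z*g1*g2 + x*y*z*g1*g2 - x*y*z*g1*g3 - x*y*g1*g2 + x*y*g1 + y^+2*z*g1*g2 - y^+2*z*g2*g3 - y*z*g1*g2 + y*z*g3 - y*g1 + y*g2 + g1 - 1))).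
  by rewrite /Qnum ?fp2 ?fq1; field; nz2.
have fD6 : Qden g1 g2 p2 q1 = (((g2 - 1) * (g1 - 1) * (x*y^+2*z*g1*g2*g3 - x*y^+2*z*g1*g2 + x*y*z*g1*g2 - x*y*z*g1*g3 - x*y*g1*g2 + x*y*g1 + y*z*g1 - y*z*g2*g3 - y*g1 + y*g2 - z*g1 + z*g3 + g1 - 1) * (y^+2*z^+2*g2*g3 - y*z*g2 - y*z*g3 + 1)) / ((y*z*g2*g3 - y*z*g2 + z*g2 - z*g3 - g2 + 1) * (x*y^+2*z*g1*g2*g3 - x*y^+2*z*g1*g2 + x*y*z*g1*g2 - x*y*z*g1*g3 - x*y*g1*g2 + x*y*g1 + y^+2*z*g1*g2 - y^+2*z*g2*g3 - y*z*g1*g2 + y*z*g3 - y*g1 + y*g2 + g1 - 1))).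
  by rewrite /Qden ?fp2 ?fq1; field; nz2.
have nz14 : (y^+2*z^+2*g2*g3 - y*z*g2 - y*z*g3 + 1) != 0.
  by apply: contraNneq hN6 => E; apply/eqP; rewrite fN6 E; ring.
have fp3 : p3 = (((z) * (x*y^+2*z*g1*g2*g3 - x*y^+2*z*g2*g3 - x*y^+2*g1*g2 + x*y^+2*g2*g3 - x*y*z*g1*g3 + x*y*z*g2*g3 + x*y*g1 - x*y*g2*g3 - y*z*g2*g3 + y*z*g3 + y*g2 - y*g3 + g3 - 1)) / ((x*y^+2*z*g1*g2*g3 - x*y^+2*z*g1*g2 + x*y*z*g1*g2 - x*y*z*g1*g3 - x*y*g1*g2 + x*y*g1 + y*z*g1 - y*z*g2*g3 - y*g1 + y*g2 - z*g1 + z*g3 + g1 - 1))).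
  by rewrite ep3 fN6 fD6 ?fp2 ?fq1; field; nz2.
have fq3 : q3 = (((y) * (x*y^+2*z*g1*g2*g3 - x*y^+2*z*g1*g2 + x*y*z*g1*g2 - x*y*z*g1*g3 - x*y*g1*g2 + x*y*g1 + y*z*g1 - y*z*g2*g3 - y*g1 + y*g2 - z*g1 + z*g3 + g1 - 1) * (x*y^+2*z*g1*g2*g3 - x*y^+2*z*g2*g3 - x*y*z*g1*g3 + x*y*z*g2*g3 - x*y*g1*g2 + x*y*g3 + x*g1 - x*g3 - y*z*g2*g3 + y*z*g3 + y*g2 - y*g3 + g3 - 1)) / ((x*y^+2*z*g1*g2*g3 - x*y^+2*z*g2*g3 - x*y^+2*g1*g2 + x*y^+2*g2*g3 - x*y*z*g1*g3 + x*y*z*g2*g3 + x*y*g1 - x*y*g2*g3 - y*z*g2*g3 + y*z*g3 + y*g2 - y*g3 + g3 - 1) * (x*y^+2*z*g1*g2*g3 - x*y^+2*z*g1*g2 + x*y*z*g1*g2 - x*y*z*g1*g3 - x*y*g1*g2 + x*y*g1 + y^+2*z*g1*g2 - y^+2*z*g2*g3 - y*z*g1*g2 + y*z*g3 - y*g1 + y*g2 + g1 - 1))).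
  by rewrite eq3 fN6 fD6 ?fp2 ?fq1; field; nz2.
rewrite fa2 fb3 fc3 fp3 fq3 fr2.
congr (_, _, _); field; nz2.
Qed.
Theorem mainTheorem2 (R : realType) (alpha : 'I_4 -> R[i]) (f : pt -> R[i]) :
  injective alpha ->
  dpKdV alpha f ->
  (* genericity: all denominators are nonzero, at every vertex *)
  (forall n : pt,
     [/\ f (sh n d2) - f (sh n d3) != 0, f (sh n d2) - f (sh n d4) != 0,
         f (sh (sh n d2) d3) - f (sh (sh n d3) d4) != 0 &
         f (sh (sh n d2) d4) - f (sh (sh n d3) d4) != 0]) ->
  (let g1 := (alpha d2 - alpha d3) / (alpha d1 - alpha d3) in
   let g2 := (alpha d2 - alpha d4) / (alpha d1 - alpha d4) in
   forall n : pt, Qnum g1 g2 (xq f n) (yq f n) != 0 /\ Qden g1 g2 (xq f n) (yq f n) != 0) ->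
  (* (i) invariance under the symmetry group G *)
  (forall g, inG g -> forall n : pt,
     [/\ xq (g f) n = xq f n, yq (g f) n = yq f n,
         uq (g f) n = uq f n & vq (g f) n = vq f n])
  /\
  (* (ii) relation by the Harrison map *)
  (let g1 := (alpha d2 - alpha d3) / (alpha d1 - alpha d3) in
   let g2 := (alpha d2 - alpha d4) / (alpha d1 - alpha d4) in
   forall n : pt,
     uq f n = yq f n * Qh g1 g2 (xq f n) (yq f n) /\
     vq f n = xq f n * (Qh g1 g2 (xq f n) (yq f n))^-1)
  /\
  (* (iii) the Harrison map is a Yang-Baxter map *)
  (forall (g1 g2 g3 : R[i]) (t l r : R[i] * R[i] * R[i]),
     obind (R23 g2 g3) (obind (R13 g1 g3) (R12 g1 g2 t)) = Some l ->
     obind (R12 g1 g2) (obind (R13 g1 g3) (R23 g2 g3 t)) = Some r ->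
     l = r).
Proof.
move=> Hinj Hk Hgen HQ; split; [|split].
- by move=> g hg n; apply: part1.
- move=> g1 g2 n.
  have dd : forall i j : nat, (i < 4)%N -> (j < 4)%N -> i != j ->
      alpha (inord i) != alpha (inord j).
    move=> i j hi hj hij; apply/eqP => /Hinj/(congr1 val).
    rewrite /= !inordK // => /eqP; by rewrite (negbTE hij).
  have e13 := Hk n d1 d3 (ltac:(by rewrite /d1 /d3 !inordK)).
  have e14 := Hk n d1 d4 (ltac:(by rewrite /d1 /d4 !inordK)).
  have e23 := Hk n d2 d3 (ltac:(by rewrite /d2 /d3 !inordK)).
  have e24 := Hk n d2 d4 (ltac:(by rewrite /d2 /d4 !inordK)).
  have e34 := Hk n d3 d4 (ltac:(by rewrite /d3 /d4 !inordK)).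
  have [hN hD] := HQ n.
  have [_ _ g2334 g2434] := Hgen n.
  exact: (@part2_alg R (f n) (f (sh n d1)) (f (sh n d2)) (f (sh n d3)) (f (sh n d4))
    (f (sh (sh n d1) d3)) (f (sh (sh n d1) d4)) (f (sh (sh n d2) d3))
    (f (sh (sh n d2) d4)) (f (sh (sh n d3) d4))
    (alpha d1) (alpha d2) (alpha d3) (alpha d4) g1 g2 (xq f n) (yq f n) (uq f n) (vq f n)
    e13 e14 e23 e24 e34 (dd 0%N 2%N isT isT isT) (dd 0%N 3%N isT isT isT)
    (dd 1%N 2%N isT isT isT) (dd 1%N 3%N isT isT isT) (dd 2%N 3%N isT isT isT)
    g2334 g2434 (erefl _) (erefl _) (erefl _) (erefl _) (erefl _) (erefl _) hN hD).
- move=> g1 g2 g3 [[x y] z] l r.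
  rewrite /R12 /R13 /R23 /harrison /=.
  do 6 (case: ifP => [/andP[? ?]|_] //=).
  case=> <- [<-].
  by eapply (@yb_alg R g1 g2 g3 x y z); (eassumption || reflexivity).
Qed.
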